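(* Assume $f_0,f_1\in \mathrm{PL}_0(\mathbf{I})$ generate a standard isomorphic copy of $F$. (Up) Suppose $(a,c)$ is an up-bump of $f_0$, $(b_n,c)$ is an orbital of $f_1$, and $p$ is the minimal number such that $f_0|_{[p,c]}=f_1|_{[p,c]}$. If $q\in(a,p)$ satisfies $qf_0=qf_1$, then $q\in(b_n,p)$. (Down) Suppose $(a,c)$ is a down-bump of $f_0$, $(a,d_1)$ is an orbital of $f_1$, and $\rho$ is the maximal number such that $f_0|_{[a,\rho]}=f_1|_{[a,\rho]}$. If $q\in(\rho,c)$ satisfies $qf_0=qf_1$, then $q\in(\rho,d_1)$.
   Context: $\mathrm{PL}_0(\mathbf{I})$ is the group of orientation-preserving piecewise-linear homeomorphisms of $[0,1]$ with finitely many points of non-differentiability; functions act on the right ($tf=f(t)$). The orbitals of $f$ are the connected components (open intervals) of $\operatorname{Supp}(f)=\{x: xf\ne x\}$; an orbital $A$ is an up-bump (resp. down-bump) if $xf>x$ (resp. $xf<x$) for all $x\in A$. Thompson's group $F=\langle x_0,x_1\mid [x_0x_1^{-1},x_1^{x_0}]=[x_0x_1^{-1},x_1^{x_0^2}]=1\rangle$, with $a^b=b^{-1}ab$, $[a,b]=aba^{-1}b^{-1}$; $f_0,f_1$ generate a standard isomorphic copy of $F$ if $\langle f_0,f_1\rangle\cong F$ via an isomorphism with $x_0\mapsto f_0$, $x_1\mapsto f_1$. *)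

(* Defs.v *)
From Stdlib Require Import Reals Lra List.
Import ListNotations.
Open Scope R_scope.

(** Values outside [0,1] are irrelevant. *)
Definition PL0 (f : R -> R) : Prop :=
  f 0 = 0 /\ f 1 = 1 /\
  exists (n : nat) (b : nat -> R),
    b 0%nat = 0 /\ b n = 1 /\
    (forall i, (i < n)%nat -> b i < b (S i)) /\
    (forall i, (i < n)%nat -> exists m c, 0 < m /\
        forall t, b i <= t <= b (S i) -> f t = m * t + c).

Definition PL0_inverse (f g : R -> R) : Prop :=
  PL0 g /\ forall t, 0 <= t <= 1 -> g (f t) = t /\ f (g t) = t.

(** Support and orbitals.  (a,c) is an orbital of f iff it is a connected
    component of Supp(f) = {x in [0,1] : xf <> x}, i.e. (a,c) is contained in
    Supp(f) and its endpoints are not in Supp(f). *)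
Definition in_supp (f : R -> R) (x : R) : Prop := 0 <= x <= 1 /\ f x <> x.

Definition orbital (f : R -> R) (a c : R) : Prop :=
  0 <= a < c /\ c <= 1 /\ ~ in_supp f a /\ ~ in_supp f c /\
  (forall x, a < x < c -> in_supp f x).

Definition up_bump (f : R -> R) (a c : R) : Prop :=
  orbital f a c /\ forall x, a < x < c -> f x > x.

Definition down_bump (f : R -> R) (a c : R) : Prop :=
  orbital f a c /\ forall x, a < x < c -> f x < x.

(** Words in x0, x1 and their inverses: (i, e) with i = false for x0,
    i = true for x1, e = true for the inverse letter. *)
Definition letter := (bool * bool)%type.
Definition word := list letter.

Definition X0 : word := [(false, false)].
Definition X1 : word := [(true, false)].
Definition winv (w : word) : word :=
  rev (map (fun l : letter => (fst l, negb (snd l))) w).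
Definition wconj (a b : word) : word := winv b ++ a ++ b.
Definition wcomm (a b : word) : word := a ++ b ++ winv a ++ winv b.

Definition relators : list word :=
  [ wcomm (X0 ++ winv X1) (wconj X1 X0);
    wcomm (X0 ++ winv X1) (wconj X1 (X0 ++ X0)) ].

Inductive wequiv : word -> word -> Prop :=
| we_refl w : wequiv w w
| we_sym u v : wequiv u v -> wequiv v u
| we_trans u v w : wequiv u v -> wequiv v w -> wequiv u w
| we_cancel u v (l : letter) :
    wequiv (u ++ [l; (fst l, negb (snd l))] ++ v) (u ++ v)
| we_rel u v r : In r relators -> wequiv (u ++ r ++ v) (u ++ v).

(** Right action: t(w1 w2 ... wk) = (...((t w1) w2)...) wk. *)
Definition gen (f0 f1 g0 g1 : R -> R) (l : letter) : R -> R :=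
  match l with
  | (false, false) => f0 | (false, true) => g0
  | (true, false) => f1  | (true, true) => g1
  end.

Definition weval (f0 f1 g0 g1 : R -> R) (w : word) (t : R) : R :=
  fold_left (fun s l => gen f0 f1 g0 g1 l s) w t.

(** f0, f1 (with inverses g0, g1) generate a standard isomorphic copy of F:
    the assignment x0 |-> f0, x1 |-> f1 induces an isomorphism F -> <f0,f1>,
    i.e. a word is trivial in F iff it evaluates to the identity on [0,1]. *)
Definition standard_copy (f0 f1 g0 g1 : R -> R) : Prop :=
  forall w : word,
    (forall t, 0 <= t <= 1 -> weval f0 f1 g0 g1 w t = t) <-> wequiv w [].

Definition agree_on (f g : R -> R) (x y : R) : Prop :=
  forall t, x <= t <= y -> f t = g t.

(* Main.v *)
Require Import Defs.
From Stdlib Require Import Reals Lra Psatz Classical Lia List.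
Import ListNotations.
Open Scope R_scope.

Definition LA (f : R -> R) := forall L, 0 < L <= 1 -> exists d m c, 0 < d /\ 0 < m /\
  forall x, L - d <= x <= L -> f x = m * x + c.
Definition RA (f : R -> R) := forall L, 0 <= L < 1 -> exists d m c, 0 < d /\ 0 < m /\
  forall x, L <= x <= L + d -> f x = m * x + c.
Definition SI (f : R -> R) := forall x y, 0 <= x -> x < y -> y <= 1 -> f x < f y.
Definition Good f := f 0 = 0 /\ f 1 = 1 /\ SI f /\ LA f /\ RA f.

Lemma Good_range f x : Good f -> 0 <= x <= 1 -> 0 <= f x <= 1.
Proof.
  intros [H0 [H1 [HS _]]] Hx.
  destruct (Req_dec x 0) as [->|n0]; [lra|].
  destruct (Req_dec x 1) as [->|n1]; [lra|].
  pose proof (HS 0 x ltac:(lra) ltac:(lra) ltac:(lra)).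
  pose proof (HS x 1 ltac:(lra) ltac:(lra) ltac:(lra)). lra.
Qed.

Lemma Good_lt f x y : Good f -> 0 <= x -> x < y -> y <= 1 -> f x < f y.
Proof. intros [_ [_ [HS _]]]. apply HS. Qed.

Lemma Good_le f x y : Good f -> 0 <= x -> x <= y -> y <= 1 -> f x <= f y.
Proof.
  intros G ? ? ?. destruct (Req_dec x y) as [->|]; [lra|].
  left; apply (Good_lt f); auto; lra.
Qed.

Lemma Good_lt_inv f x y : Good f -> 0 <= x <= 1 -> 0 <= y <= 1 -> f x < f y -> x < y.
Proof.
  intros G Hx Hy H. destruct (Rlt_or_le x y); auto.
  pose proof (Good_le f y x G ltac:(lra) H0 ltac:(lra)). lra.
Qed.

Lemma Good_inj f x y : Good f -> 0 <= x <= 1 -> 0 <= y <= 1 -> f x = f y -> x = y.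
Proof.
  intros G Hx Hy H. destruct (total_order_T x y) as [[|]|]; auto.
  - pose proof (Good_lt f x y G ltac:(lra) r ltac:(lra)). lra.
  - pose proof (Good_lt f y x G ltac:(lra) r ltac:(lra)). lra.
Qed.

Lemma Good_comp f g : Good f -> Good g -> Good (fun x => f (g x)).
Proof.
  intros Gf Gg.
  pose proof Gf as [F0 [F1 [FS [FL FR]]]].
  pose proof Gg as [G0 [G1 [GS [GL GR]]]].
  split; [rewrite G0; auto|]. split; [rewrite G1; auto|].
  split; [|split].
  - intros x y ? ? ?. apply FS.
    + apply (Good_range g x Gg); lra.
    + apply GS; auto.
    + apply (Good_range g y Gg); lra.
  - intros L HL. destruct (GL L HL) as [d1 [m1 [c1 [Hd1 [Hm1 E1]]]]].
    assert (0 < g L <= 1).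
    { split. rewrite <- G0. apply GS; lra. apply (Good_range g L Gg); lra. }
    destruct (FL (g L) H) as [d2 [m2 [c2 [Hd2 [Hm2 E2]]]]].
    exists (Rmin d1 (d2 / m1)), (m2 * m1), (m2 * c1 + c2).
    assert (Hd : 0 < Rmin d1 (d2 / m1)).
    { apply Rmin_glb_lt; auto. apply Rdiv_lt_0_compat; auto. }
    assert (Hmd : m1 * Rmin d1 (d2 / m1) <= d2).
    { pose proof (Rmin_r d1 (d2/m1)).
      apply Rle_trans with (m1 * (d2/m1)). apply Rmult_le_compat_l; lra.
      right; field; lra. }
    pose proof (Rmin_l d1 (d2/m1)).
    split; auto. split; [nra|]. intros x Hx.
    rewrite E1 by lra. rewrite E2. ring.
    rewrite (E1 L) by lra. nra.
  - intros L HL. destruct (GR L HL) as [d1 [m1 [c1 [Hd1 [Hm1 E1]]]]].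
    assert (0 <= g L < 1).
    { split. apply (Good_range g L Gg); lra. rewrite <- G1. apply GS; lra. }
    destruct (FR (g L) H) as [d2 [m2 [c2 [Hd2 [Hm2 E2]]]]].
    exists (Rmin d1 (d2 / m1)), (m2 * m1), (m2 * c1 + c2).
    assert (Hd : 0 < Rmin d1 (d2 / m1)).
    { apply Rmin_glb_lt; auto. apply Rdiv_lt_0_compat; auto. }
    assert (Hmd : m1 * Rmin d1 (d2 / m1) <= d2).
    { pose proof (Rmin_r d1 (d2/m1)).
      apply Rle_trans with (m1 * (d2/m1)). apply Rmult_le_compat_l; lra.
      right; field; lra. }
    pose proof (Rmin_l d1 (d2/m1)).
    split; auto. split; [nra|]. intros x Hx.
    rewrite E1 by lra. rewrite E2. ring.
    rewrite (E1 L) by lra. nra.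
Qed.

Lemma PL0_Good f : PL0 f -> Good f.
Proof.
  intros [H0 [H1 [n [b [Hb0 [Hbn [Hinc Haff]]]]]]].
  assert (Hmono : forall i j, (i <= j)%nat -> (j <= n)%nat -> b i <= b j).
  { intros i j Hij. induction Hij; intros; [lra|].
    pose proof (Hinc m ltac:(lia)). pose proof (IHHij ltac:(lia)). lra. }
  assert (Hleft : forall L, 0 < L -> forall j, (j <= n)%nat -> L <= b j ->
            exists i, (i < j)%nat /\ b i < L <= b (S i)).
  { intros L HL j. induction j; intros Hj HLj.
    - lra.
    - destruct (Rle_or_lt L (b j)).
      + destruct (IHj ltac:(lia) H) as [i [? ?]]. exists i; split; auto; lia.
      + exists j; split; auto; lra. }
  assert (Hright : forall L, 0 <= L -> forall j, (j <= n)%nat -> L < b j ->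
            exists i, (i < j)%nat /\ b i <= L < b (S i)).
  { intros L HL j. induction j; intros Hj HLj.
    - lra.
    - destruct (Rlt_or_le L (b j)).
      + destruct (IHj ltac:(lia) H) as [i [? ?]]. exists i; split; auto; lia.
      + exists j; split; auto; lra. }
  assert (HS : forall i, (i <= n)%nat -> forall x y, 0 <= x -> x < y -> y <= b i -> f x < f y).
  { intro i; induction i; intros Hi x y Hx Hxy Hy.
    - lra.
    - destruct (Rle_or_lt y (b i)).
      + apply IHi; auto; lia.
      + destruct (Haff i ltac:(lia)) as [m [c [Hm E]]].
        pose proof (Hinc i ltac:(lia)).
        destruct (Rle_or_lt (b i) x).
        * rewrite (E x) by lra. rewrite (E y) by lra. nra.
        * apply Rlt_trans with (f (b i)).
          -- apply IHi; auto; try lia; lra.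
          -- rewrite (E (b i)) by lra. rewrite (E y) by lra. nra. }
  split; auto. split; auto. split; [|split].
  - intros x y ? ? ?. apply (HS n); auto; lra.
  - intros L HL. destruct (Hleft L ltac:(lra) n ltac:(lia) ltac:(lra)) as [i [Hi Hb]].
    destruct (Haff i Hi) as [m [c [Hm E]]].
    exists (L - b i), m, c. split; [lra|]. split; auto. intros x Hx. apply E. lra.
  - intros L HL. destruct (Hright L ltac:(lra) n ltac:(lia) ltac:(lra)) as [i [Hi Hb]].
    destruct (Haff i Hi) as [m [c [Hm E]]].
    exists (b (S i) - L), m, c. split; [lra|]. split; auto. intros x Hx. apply E. lra.
Qed.

Lemma sup_zero (D : R -> R) al be :
  0 <= al -> al <= be -> be <= 1 -> D al = 0 ->
  (forall L, 0 < L <= 1 -> exists d m c, 0 < d /\ forall x, L - d <= x <= L -> D x = m * x + c) ->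
  exists z, al <= z <= be /\ D z = 0 /\ forall x, z < x <= be -> D x <> 0.
Proof.
  intros Ha Hab Hb HDa HL.
  set (E := fun x => al <= x <= be /\ D x = 0).
  assert (Hbd : bound E) by (exists be; intros x [? ?]; lra).
  destruct (completeness E Hbd (ex_intro _ al (conj (conj (Rle_refl _) Hab) HDa))) as [z [Hub Hlub]].
  assert (Haz : al <= z) by (apply Hub; split; [lra|auto]).
  assert (Hzb : z <= be) by (apply Hlub; intros x [? ?]; lra).
  assert (Hex : forall r, r < z -> exists e, E e /\ r < e).
  { intros r Hr. apply NNPP; intro Hn. assert (z <= r); [|lra].
    apply Hlub. intros x Hx. destruct (Rle_or_lt x r); auto. exfalso; apply Hn; eauto. }
  exists z. split; [lra|]. split.
  - destruct (Req_dec (D z) 0) as [|Hz]; auto. exfalso.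
    destruct (Req_dec z al) as [->|Hza]; [contradiction|].
    destruct (HL z ltac:(lra)) as [d [m [c [Hd E1]]]].
    destruct (Hex (z - d) ltac:(lra)) as [e1 [[He1 De1] Hr1]].
    assert (e1 <= z) by (apply Hub; split; auto).
    assert (e1 <> z) by (intro; subst; contradiction).
    destruct (Hex e1 ltac:(lra)) as [e2 [[He2 De2] Hr2]].
    assert (e2 <= z) by (apply Hub; split; auto).
    assert (e2 <> z) by (intro; subst; contradiction).
    rewrite E1 in De1 by lra. rewrite E1 in De2 by lra. rewrite E1 in Hz by lra.
    assert (m * (e2 - e1) = 0) by lra.
    apply Rmult_integral in H3. destruct H3; [|lra]. subst m. lra.
  - intros x Hx HDx. assert (x <= z) by (apply Hub; split; [lra|auto]). lra.
Qed.

Fixpoint it (f : R -> R) (n : nat) (x : R) : R :=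
  match n with O => x | S k => f (it f k x) end.

Lemma it_range f n x : Good f -> 0 <= x <= 1 -> 0 <= it f n x <= 1.
Proof. intros G Hx. induction n; simpl; auto. apply (Good_range f); auto. Qed.

Lemma it_inj f n x y : Good f -> 0 <= x <= 1 -> 0 <= y <= 1 -> it f n x = it f n y -> x = y.
Proof.
  intros G Hx Hy. induction n; simpl; auto. intro H. apply IHn.
  apply (Good_inj f); auto; apply it_range; auto.
Qed.

Lemma comm_it c p n x : Good c -> Good p -> (forall x, 0 <= x <= 1 -> p (c x) = c (p x)) ->
  0 <= x <= 1 -> p (it c n x) = it c n (p x).
Proof.
  intros Gc Gp Hc Hx. induction n; simpl; auto.
  rewrite Hc by (apply it_range; auto). rewrite IHn; auto.
Qed.

Lemma orbit_dec f s t x : Good f -> 0 <= s -> t <= 1 -> f s = s ->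
  (forall y, s < y <= t -> f y <> y) -> s < x <= t -> f x < x ->
  forall n, s < it f n x <= x /\ f (it f n x) < it f n x.
Proof.
  intros G Hs Ht Hfs Hmv Hx Hfx n. induction n; simpl.
  - split; auto; lra.
  - destruct IHn as [[H1 H2] H3]. set (y := it f n x) in *.
    assert (s < f y) by (rewrite <- Hfs at 1; apply (Good_lt f); auto; lra).
    split; [split; lra|].
    apply (Good_lt f); auto; lra.
Qed.

Lemma orbit_conv f s t x : Good f -> 0 <= s -> t <= 1 -> f s = s ->
  (forall y, s < y <= t -> f y <> y) -> s < x <= t -> f x < x ->
  forall eps, 0 < eps -> exists N, it f N x < s + eps.
Proof.
  intros G Hs Ht Hfs Hmv Hx Hfx eps Heps.
  pose proof (orbit_dec f s t x G Hs Ht Hfs Hmv Hx Hfx) as OD.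
  apply NNPP; intro Hn.
  assert (Hge : forall N, s + eps <= it f N x).
  { intro N. destruct (Rlt_or_le (it f N x) (s + eps)); auto. exfalso; apply Hn; eauto. }
  set (E := fun y => exists n, y = - it f n x).
  assert (Hbd : bound E) by (exists (-(s+eps)); intros y [n ->]; specialize (Hge n); lra).
  destruct (completeness E Hbd (ex_intro _ (- it f 0 x) (ex_intro _ 0%nat eq_refl))) as [M [Hub Hlub]].
  set (L := - M).
  assert (HL1 : forall n, L <= it f n x).
  { intro n. assert (- it f n x <= M) by (apply Hub; exists n; auto). unfold L; lra. }
  assert (HL2 : forall b, (forall n, b <= it f n x) -> b <= L).
  { intros b Hb. assert (M <= - b); [|unfold L; lra].
    apply Hlub. intros y [n ->]. specialize (Hb n). lra. }
  assert (HsL : s + eps <= L) by (apply HL2; auto).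
  assert (HLx : L <= x) by apply (HL1 0%nat).
  assert (HLfx : L <= f x) by apply (HL1 1%nat).
  assert (HfL : f L <= L).
  { apply HL2. intro n. destruct n; simpl.
    - apply Rle_trans with (f x). apply (Good_le f); auto; lra. lra.
    - pose proof (it_range f n x G ltac:(lra)). pose proof (HL1 n).
      apply (Good_le f); auto; lra. }
  assert (HfL' : f L <> L) by (apply Hmv; lra).
  destruct G as [G0 [G1 [GS [GL GR]]]].
  destruct (GR L ltac:(lra)) as [d [m [c [Hd [Hm E1]]]]].
  set (eta := Rmin d ((L - f L) / m)).
  assert (Heta : 0 < eta).
  { apply Rmin_glb_lt; auto. apply Rdiv_lt_0_compat; lra. }
  assert (Hmeta : m * eta <= L - f L).
  { apply Rle_trans with (m * ((L - f L)/m)). apply Rmult_le_compat_l; [lra|apply Rmin_r].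
    right; field; lra. }
  assert (eta <= d) by apply Rmin_l.
  assert (exists n, it f n x < L + eta) as [n Hn'].
  { apply NNPP; intro Hn2. assert (L + eta <= L); [|lra].
    apply HL2. intro n. destruct (Rlt_or_le (it f n x) (L + eta)); auto.
    exfalso; apply Hn2; eauto. }
  pose proof (HL1 (S n)) as HS. simpl in HS.
  pose proof (HL1 n).
  assert (L <= it f n x <= L + d) by lra.
  rewrite E1 in HS by lra. rewrite (E1 L) in HfL, Hmeta, HfL' by lra.
  nra.
Qed.

Lemma comm_inv phi phii psi : Good phi -> Good phii -> Good psi ->
  (forall x, 0 <= x <= 1 -> phii (phi x) = x /\ phi (phii x) = x) ->
  (forall x, 0 <= x <= 1 -> psi (phi x) = phi (psi x)) ->
  forall x, 0 <= x <= 1 -> psi (phii x) = phii (psi x).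
Proof.
  intros G1 G2 G3 Hinv Hc x Hx.
  pose proof (Good_range phii x G2 Hx) as R1.
  pose proof (Good_range psi _ G3 R1) as R2.
  pose proof (Hc (phii x) R1) as E. rewrite (proj2 (Hinv x Hx)) in E.
  rewrite E. rewrite (proj1 (Hinv _ R2)). auto.
Qed.

Lemma KL_near c p s t y : Good c -> Good p ->
  (forall x, 0 <= x <= 1 -> p (c x) = c (p x)) ->
  0 <= s -> t <= 1 -> c s = s -> (forall x, s < x <= t -> c x <> x) ->
  s < y <= t -> c y < y -> p y = y ->
  exists d, 0 < d /\ forall x, s <= x <= s + d -> p x = x.
Proof.
  intros Gc Gp Hc Hs Ht Hcs Hmv Hy Hcy Hpy.
  pose proof Gp as [_ [_ [_ [_ PR]]]].
  destruct (PR s ltac:(lra)) as [d [m [cc [Hd [Hm E]]]]].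
  destruct (orbit_conv c s t y Gc Hs Ht Hcs Hmv Hy Hcy d Hd) as [N HN].
  pose proof (orbit_dec c s t y Gc Hs Ht Hcs Hmv Hy Hcy N) as [[A1 A2] A3].
  pose proof (orbit_dec c s t y Gc Hs Ht Hcs Hmv Hy Hcy (S N)) as [[B1 B2] B3].
  simpl in B1, B2, B3.
  pose proof (comm_it c p N y Gc Gp Hc ltac:(lra)) as F1.
  pose proof (comm_it c p (S N) y Gc Gp Hc ltac:(lra)) as F2. simpl in F2.
  rewrite Hpy in F1, F2.
  rewrite E in F1 by lra. rewrite E in F2 by lra.
  set (a := it c N y) in *.
  assert (m * (a - c a) = a - c a) by lra.
  assert (m = 1).
  { apply Rmult_eq_reg_r with (a - c a). lra. lra. }
  subst m. exists d. split; auto. intros x Hx. rewrite E by lra. lra.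
Qed.

Lemma KL phi phii psi s t : Good phi -> Good phii -> Good psi ->
  (forall x, 0 <= x <= 1 -> phii (phi x) = x /\ phi (phii x) = x) ->
  (forall x, 0 <= x <= 1 -> psi (phi x) = phi (psi x)) ->
  0 <= s -> s < t -> t <= 1 -> phi s = s -> (forall x, s < x <= t -> phi x <> x) ->
  forall y, s < y <= t -> psi y = y -> forall x, s < x <= t -> psi x = x.
Proof.
  intros G1 G2 G3 Hinv Hc Hs Hst Ht Hps Hmv y Hy Hpy.
  assert (Hc' := comm_inv phi phii psi G1 G2 G3 Hinv Hc).
  assert (His : phii s = s) by (rewrite <- Hps at 1; apply Hinv; lra).
  assert (Hmv' : forall x, s < x <= t -> phii x <> x).
  { intros x Hx E. apply (Hmv x Hx). rewrite <- E at 1. apply Hinv; lra. }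
  assert (Hdec : forall x, s < x <= t -> phi x < x \/ phii x < x).
  { intros x Hx. destruct (Rlt_or_le (phi x) x) as [|Hle]; [left; auto|right].
    assert (phi x <> x) by (apply Hmv; auto).
    assert (x < phi x) by lra.
    pose proof (Good_range phi x G1 ltac:(lra)).
    rewrite <- (proj1 (Hinv x ltac:(lra))) at 2.
    apply (Good_lt phii); auto; lra. }
  assert (exists d, 0 < d /\ forall x, s <= x <= s + d -> psi x = x) as [d [Hd Hid]].
  { destruct (Hdec y Hy).
    - apply (KL_near phi psi s t y); auto; lra.
    - apply (KL_near phii psi s t y); auto; lra. }
  intros x Hx.
  assert (Gen : forall c, Good c -> (forall z, 0 <= z <= 1 -> psi (c z) = c (psi z)) ->
     c s = s -> (forall z, s < z <= t -> c z <> z) -> c x < x -> psi x = x).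
  { intros c Gc Hcc Hcs Hcm Hcx.
    destruct (orbit_conv c s t x Gc Hs Ht Hcs Hcm Hx Hcx d Hd) as [N HN].
    pose proof (orbit_dec c s t x Gc Hs Ht Hcs Hcm Hx Hcx N) as [[A1 A2] A3].
    pose proof (comm_it c psi N x Gc G3 Hcc ltac:(lra)) as F.
    rewrite Hid in F by lra.
    apply (it_inj c N); auto; try lra.
    apply (Good_range psi); auto; lra. }
  destruct (Hdec x Hx).
  - apply (Gen phi); auto.
  - apply (Gen phii); auto.
Qed.

Lemma core f0 f1 g0 g1 a bn c q :
 Good f0 -> Good f1 -> Good g0 -> Good g1 ->
 (forall t, 0<=t<=1 -> g0 (f0 t) = t /\ f0 (g0 t) = t) ->
 (forall t, 0<=t<=1 -> g1 (f1 t) = t /\ f1 (g1 t) = t) ->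
 (forall t, 0<=t<=1 -> g1 (f0 (f0 (f1 (g0 t)))) = f0 (f1 (g0 (g1 (f0 t))))) ->
 (forall t, 0<=t<=1 -> g1 (f0 (f0 (f0 (f1 (g0 (g0 t)))))) = f0 (f0 (f1 (g0 (g0 (g1 (f0 t))))))) ->
 0 <= a -> a < q -> q < bn -> bn < c -> c <= 1 ->
 (forall x, a < x < c -> x < f0 x) -> f1 bn = bn -> f0 q = f1 q -> False.
Proof.
  intros G0 G1 G0' G1' I0 I1 HK HK2 Ha Haq Hqb Hbc Hc Hup Hfb Hq.
  assert (R0 : forall x, 0 <= x <= 1 -> 0 <= f0 x <= 1) by (intros; apply Good_range; auto).
  assert (R1 : forall x, 0 <= x <= 1 -> 0 <= f1 x <= 1) by (intros; apply Good_range; auto).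
  assert (R0' : forall x, 0 <= x <= 1 -> 0 <= g0 x <= 1) by (intros; apply Good_range; auto).
  assert (R1' : forall x, 0 <= x <= 1 -> 0 <= g1 x <= 1) by (intros; apply Good_range; auto).
  pose proof G0 as [F00 [F01 [_ [LA0 _]]]].
  pose proof G1 as [F10 [F11 [_ [LA1 _]]]].
  destruct (sup_zero (fun x => f0 x - f1 x) q bn ltac:(lra) ltac:(lra) ltac:(lra) ltac:(lra))
    as [z [Hz [Dz Hmz]]].
  { intros L HL. destruct (LA0 L HL) as [d1 [m1 [c1 [Hd1 [_ E1]]]]].
    destruct (LA1 L HL) as [d2 [m2 [c2 [Hd2 [_ E2]]]]].
    exists (Rmin d1 d2), (m1 - m2), (c1 - c2). split.
    apply Rmin_glb_lt; auto. intros x Hx.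
    pose proof (Rmin_l d1 d2). pose proof (Rmin_r d1 d2).
    rewrite E1 by lra. rewrite E2 by lra. ring. }
  simpl in Dz.
  assert (Hfbn : bn < f0 bn) by (apply Hup; lra).
  assert (Hzb : z < bn).
  { destruct (Req_dec z bn); [|lra]. subst z. lra. }
  assert (Hfz : z < f0 z) by (apply Hup; lra).
  assert (Hf1z : f1 z = f0 z) by lra.
  assert (Hf1zb : f1 z < bn) by (rewrite <- Hfb; apply (Good_lt f1); auto; lra).
  assert (Hmv : forall x, z < x <= bn -> g1 (f0 x) <> x).
  { intros x Hx E. apply (Hmz x Hx). simpl.
    assert (f1 (g1 (f0 x)) = f0 x) by (apply I1; apply R0; lra).
    rewrite E in H. lra. }
  assert (Hhz : g1 (f0 z) = z) by (rewrite <- Hf1z; apply I1; lra).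
  destruct (sup_zero (fun x => f1 x - x) 0 z ltac:(lra) ltac:(lra) ltac:(lra) ltac:(simpl; lra))
    as [u [Hu [Du Hmu]]].
  { intros L HL. destruct (LA1 L HL) as [d2 [m2 [c2 [Hd2 [_ E2]]]]].
    exists d2, (m2 - 1), c2. split; auto. intros x Hx. rewrite E2 by lra. ring. }
  simpl in Du. assert (Du' : f1 u = u) by lra.
  assert (Huz : u < z).
  { destruct (Req_dec u z); [|lra]. subst u. lra. }
  assert (Hmu' : forall x, u < x <= z -> f1 x <> x).
  { intros x Hx E. apply (Hmu x Hx). simpl. lra. }
  set (w0 := g0 z).
  assert (Hw0 : 0 <= w0 <= 1) by (apply R0'; lra).
  assert (Hfw0 : f0 w0 = z) by (apply I0; lra).
  assert (Hw0z : w0 < z).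
  { apply (Good_lt_inv f0); auto; lra. }
  set (H := fun t => g1 (f0 t)).
  set (Hi := fun t => g0 (f1 t)).
  set (K := fun t => f0 (f1 (g0 t))).
  set (Ki := fun t => f0 (g1 (g0 t))).
  set (K2 := fun t => f0 (f0 (f1 (g0 (g0 t))))).
  set (K2i := fun t => f0 (f0 (g1 (g0 (g0 t))))).
  assert (GH : Good H) by (apply (Good_comp g1 f0); auto).
  assert (GHi : Good Hi) by (apply (Good_comp g0 f1); auto).
  assert (GK : Good K) by (apply (Good_comp f0 (fun t => f1 (g0 t))); auto; apply Good_comp; auto).
  assert (GKi : Good Ki) by (apply (Good_comp f0 (fun t => g1 (g0 t))); auto; apply Good_comp; auto).
  assert (GK2 : Good K2).
  { apply (Good_comp f0 (fun t => f0 (f1 (g0 (g0 t))))); auto.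
    apply (Good_comp f0 (fun t => f1 (g0 (g0 t)))); auto.
    apply (Good_comp f1 (fun t => g0 (g0 t))); auto. apply Good_comp; auto. }
  assert (IH : forall x, 0 <= x <= 1 -> Hi (H x) = x /\ H (Hi x) = x).
  { intros x Hx; unfold H, Hi; split.
    - rewrite (proj2 (I1 _ (R0 _ Hx))). apply I0; auto.
    - rewrite (proj2 (I0 _ (R1 _ Hx))). apply I1; auto. }
  assert (IK : forall x, 0 <= x <= 1 -> Ki (K x) = x /\ K (Ki x) = x).
  { intros x Hx; unfold K, Ki; split.
    - rewrite (proj1 (I0 _ (R1 _ (R0' _ Hx)))). rewrite (proj1 (I1 _ (R0' _ Hx))). apply I0; auto.
    - rewrite (proj1 (I0 _ (R1' _ (R0' _ Hx)))). rewrite (proj2 (I1 _ (R0' _ Hx))). apply I0; auto. }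
  assert (CHK : forall x, 0 <= x <= 1 -> K (H x) = H (K x)).
  { intros x Hx; unfold H, K; symmetry; apply HK; auto. }
  assert (CKH : forall x, 0 <= x <= 1 -> H (K x) = K (H x)).
  { intros x Hx; unfold H, K; apply HK; auto. }
  assert (CHK2 : forall x, 0 <= x <= 1 -> K2 (H x) = H (K2 x)).
  { intros x Hx; unfold H, K2; symmetry; apply HK2; auto. }
  assert (Hmv' : forall x, z < x <= bn -> H x <> x) by exact Hmv.
  destruct (total_order_T u w0) as [[Hlt|Heq]|Hgt].
  -
    set (s := f0 u).
    assert (Hs0 : 0 <= s <= 1) by (apply R0; lra).
    assert (Hsz : s < z) by (rewrite <- Hfw0; apply (Good_lt f0); auto; lra).
    assert (HKs : K s = s) by (unfold K, s; rewrite (proj1 (I0 u ltac:(lra))); rewrite Du'; auto).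
    assert (HKmv : forall x, s < x <= z -> K x <> x).
    { intros x Hx E. unfold K in E.
      assert (g0 x = f1 (g0 x)).
      { rewrite <- E at 1. apply I0. apply R1, R0'. lra. }
      assert (u < g0 x).
      { apply (Good_lt_inv f0); auto; try lra. apply R0'; lra. fold s. rewrite (proj2 (I0 x ltac:(lra))). lra. }
      assert (g0 x <= w0) by (apply (Good_le g0); auto; lra).
      apply (Hmu' (g0 x)); [lra|auto]. }
    assert (HHid : forall x, s < x <= z -> H x = x).
    { intros x0 Hx0. apply (KL K Ki H s z GK GKi GH IK CKH ltac:(lra) Hsz ltac:(lra) HKs HKmv z ltac:(lra) Hhz x0 Hx0). }
    assert (HKz : K z <> z) by (apply HKmv; lra).
    assert (HKis : Ki s = s) by (rewrite <- HKs at 1; apply IK; lra).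
    destruct (Rlt_or_le (K z) z) as [Hlo|Hhi].
    + assert (Hkiz : z < Ki z).
      { apply (Good_lt_inv K); auto; try lra. apply (Good_range Ki); auto; lra.
        rewrite (proj2 (IK z ltac:(lra))). lra. }
      set (x' := Rmin (Ki z) bn).
      assert (z < x' <= bn).
      { unfold x'. split. apply Rmin_glb_lt; lra. apply Rmin_r. }
      assert (x' <= Ki z) by apply Rmin_l.
      pose proof (Good_range Ki z GKi ltac:(lra)).
      set (x := K x').
      assert (x <= z).
      { unfold x. rewrite <- (proj2 (IK z ltac:(lra))). apply (Good_le K); auto; lra. }
      assert (s < x) by (unfold x; rewrite <- HKs; apply (Good_lt K); auto; lra).
      assert (Hx := HHid x ltac:(lra)).
      assert (CHKi := comm_inv K Ki H GK GKi GH IK CKH).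
      apply (Hmv' x'); auto.
      replace x' with (Ki x) at 1 by (unfold x; apply IK; lra).
      rewrite CHKi by lra. rewrite Hx. unfold x; apply IK; lra.
    + assert (Hhi' : z < K z) by lra.
      set (x' := Rmin (K z) bn).
      assert (z < x' <= bn).
      { unfold x'. split. apply Rmin_glb_lt; lra. apply Rmin_r. }
      assert (x' <= K z) by apply Rmin_l.
      pose proof (Good_range K z GK ltac:(lra)).
      set (x := Ki x').
      assert (x <= z).
      { unfold x. rewrite <- (proj1 (IK z ltac:(lra))). apply (Good_le Ki); auto; lra. }
      assert (s < x) by (unfold x; rewrite <- HKis; apply (Good_lt Ki); auto; lra).
      assert (Hx := HHid x ltac:(lra)).
      apply (Hmv' x'); auto.
      replace x' with (K x) at 1 by (unfold x; apply IK; lra).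
      rewrite CKH by lra. rewrite Hx. unfold x; apply IK; lra.
  -
    assert (HK2y : K2 (f0 z) = f0 z).
    { unfold K2. rewrite (proj1 (I0 z ltac:(lra))). fold w0. rewrite <- Heq. rewrite Du'.
      rewrite Heq. unfold w0. rewrite (proj2 (I0 z ltac:(lra))). auto. }
    assert (Hid : forall x, z < x <= bn -> K2 x = x).
    { intros x0 Hx0. apply (KL H Hi K2 z bn GH GHi GK2 IH CHK2 ltac:(lra) Hzb ltac:(lra) Hhz Hmv' (f0 z) ltac:(lra) HK2y x0 Hx0). }
    assert (Hfzr : 0 <= f0 z <= 1) by (apply R0; lra).
    assert (Hffz : f0 z < f0 (f0 z)) by (apply Hup; lra).
    pose proof (R0 _ Hfzr).
    set (x := Rmin (f0 (f0 z)) bn).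
    assert (f0 z < x) by (unfold x; apply Rmin_glb_lt; lra).
    assert (x <= bn) by apply Rmin_r.
    assert (x <= f0 (f0 z)) by apply Rmin_l.
    assert (Hx := Hid x ltac:(lra)). unfold K2 in Hx.
    assert (Rx : 0 <= g0 x <= 1) by (apply R0'; lra).
    assert (Rx2 : 0 <= g0 (g0 x) <= 1) by (apply R0'; lra).
    assert (E1 : f0 (f0 (g0 (g0 x))) = x).
    { rewrite (proj2 (I0 _ Rx)). apply I0; lra. }
    assert (f1 (g0 (g0 x)) = g0 (g0 x)).
    { pose proof (R1 _ Rx2) as Q1. pose proof (R0 _ Q1) as Q2. pose proof (R0 _ Rx2) as Q3.
      apply (Good_inj f0 _ _ G0 Q1 Rx2).
      apply (Good_inj f0 _ _ G0 Q2 Q3). lra. }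
    assert (g0 (g0 x) <= z).
    { rewrite <- (proj1 (I0 z ltac:(lra))). apply (Good_le g0); auto; try lra.
      rewrite <- (proj1 (I0 (f0 z) ltac:(lra))). apply (Good_le g0); auto; lra. }
    assert (u < g0 (g0 x)).
    { rewrite Heq. unfold w0. apply (Good_lt g0); auto; try lra.
      rewrite <- (proj1 (I0 z ltac:(lra))) at 1. apply (Good_lt g0); auto; lra. }
    apply (Hmu' (g0 (g0 x))); auto; lra.
  -
    assert (HKy : K (f0 u) = f0 u).
    { unfold K. rewrite (proj1 (I0 u ltac:(lra))). rewrite Du'. auto. }
    assert (z < f0 u) by (rewrite <- Hfw0; apply (Good_lt f0); auto; lra).
    assert (f0 u < f0 z) by (apply (Good_lt f0); auto; lra).
    assert (Hid : forall x, z < x <= bn -> K x = x).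
    { intros x0 Hx0. apply (KL H Hi K z bn GH GHi GK IH CHK ltac:(lra) Hzb ltac:(lra) Hhz Hmv' (f0 u) ltac:(lra) HKy x0 Hx0). }
    assert (Hx := Hid (f0 z) ltac:(lra)). unfold K in Hx.
    rewrite (proj1 (I0 z ltac:(lra))) in Hx.
    assert (f1 z = z).
    { apply (Good_inj f0 (f1 z) z G0 (R1 z ltac:(lra)) ltac:(lra)). lra. }
    lra.
Qed.

Definition flip (f : R -> R) (x : R) := 1 - f (1 - x).
Lemma r11 y : 1 - (1 - y) = y. Proof. ring. Qed.

Lemma Good_flip f : Good f -> Good (flip f).
Proof.
  intros [F0 [F1 [FS [FL FR]]]]. unfold flip.
  split; [rewrite Rminus_0_r, F1; ring|].
  split; [replace (1-1) with 0 by ring; rewrite F0; ring|].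
  split; [|split].
  - intros x y ? ? ?. assert (f (1 - y) < f (1 - x)) by (apply FS; lra). lra.
  - intros L HL. destruct (FR (1 - L) ltac:(lra)) as [d [m [c [Hd [Hm E]]]]].
    exists d, m, (1 - m - c). split; auto. split; auto. intros x Hx.
    rewrite E by lra. ring.
  - intros L HL. destruct (FL (1 - L) ltac:(lra)) as [d [m [c [Hd [Hm E]]]]].
    exists d, m, (1 - m - c). split; auto. split; auto. intros x Hx.
    rewrite E by lra. ring.
Qed.

Lemma comm_from (A Ai B Bi : R -> R) : Good A -> Good Ai -> Good B -> Good Bi ->
  (forall x, 0 <= x <= 1 -> Ai (A x) = x /\ A (Ai x) = x) ->
  (forall x, 0 <= x <= 1 -> Bi (B x) = x /\ B (Bi x) = x) ->
  (forall t, 0 <= t <= 1 -> Bi (Ai (B (A t))) = t) ->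
  forall t, 0 <= t <= 1 -> A (B t) = B (A t).
Proof.
  intros GA GAi GB GBi IA IB W t Ht.
  pose proof (Good_range A t GA Ht) as R1.
  pose proof (Good_range B _ GB R1) as R2.
  pose proof (Good_range Ai _ GAi R2) as R3.
  assert (Ai (B (A t)) = B t).
  { pose proof (W t Ht) as Wt. pose proof (proj2 (IB _ R3)) as E. rewrite Wt in E. auto. }
  pose proof (proj2 (IA _ R2)) as E. rewrite H in E. auto.
Qed.

Theorem lemma2p9 (f0 f1 g0 g1 : R -> R) :
  PL0 f0 -> PL0 f1 -> PL0_inverse f0 g0 -> PL0_inverse f1 g1 ->
  standard_copy f0 f1 g0 g1 ->
  (* (Up) *)
  (forall a c bn p q : R,
     up_bump f0 a c -> orbital f1 bn c ->
     0 <= p <= c -> agree_on f0 f1 p c ->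
     (forall p', 0 <= p' -> agree_on f0 f1 p' c -> p <= p') ->
     a < q < p -> f0 q = f1 q -> bn < q < p) /\
  (* (Down) *)
  (forall a c d1 rho q : R,
     down_bump f0 a c -> orbital f1 a d1 ->
     a <= rho <= 1 -> agree_on f0 f1 a rho ->
     (forall r', r' <= 1 -> agree_on f0 f1 a r' -> r' <= rho) ->
     rho < q < c -> f0 q = f1 q -> rho < q < d1).
Proof.
  intros P0 P1 [PG0 I0] [PG1 I1] Hstd.
  assert (G0 := PL0_Good f0 P0). assert (G1 := PL0_Good f1 P1).
  assert (G0' := PL0_Good g0 PG0). assert (G1' := PL0_Good g1 PG1).
  assert (W1 : forall t, 0 <= t <= 1 -> weval f0 f1 g0 g1 (nth 0 relators []) t = t).
  { apply (proj2 (Hstd _)).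
    pose proof (we_rel [] [] (nth 0 relators []) ltac:(simpl; auto)) as W.
    rewrite app_nil_l, app_nil_r in W. exact W. }
  assert (W2 : forall t, 0 <= t <= 1 -> weval f0 f1 g0 g1 (nth 1 relators []) t = t).
  { apply (proj2 (Hstd _)).
    pose proof (we_rel [] [] (nth 1 relators []) ltac:(simpl; auto)) as W.
    rewrite app_nil_l, app_nil_r in W. exact W. }
  unfold relators, wcomm, wconj, winv, X0, X1 in W1, W2. simpl in W1, W2.
  assert (Gc : forall f g, Good f -> Good g -> Good (fun x => f (g x))) by exact Good_comp.
  assert (IH : forall x, 0 <= x <= 1 -> (fun t => g0 (f1 t)) ((fun t => g1 (f0 t)) x) = x /\
                                    (fun t => g1 (f0 t)) ((fun t => g0 (f1 t)) x) = x).
  { intros x Hx; simpl; split.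
    - rewrite (proj2 (I1 _ (Good_range f0 x G0 Hx))). apply I0; auto.
    - rewrite (proj2 (I0 _ (Good_range f1 x G1 Hx))). apply I1; auto. }
  assert (R0' : forall x, 0 <= x <= 1 -> 0 <= g0 x <= 1) by (intros; apply Good_range; auto).
  assert (R1' : forall x, 0 <= x <= 1 -> 0 <= g1 x <= 1) by (intros; apply Good_range; auto).
  assert (R1 : forall x, 0 <= x <= 1 -> 0 <= f1 x <= 1) by (intros; apply Good_range; auto).
  assert (IK : forall x, 0 <= x <= 1 -> (fun t => f0 (g1 (g0 t))) ((fun t => f0 (f1 (g0 t))) x) = x /\
                                    (fun t => f0 (f1 (g0 t))) ((fun t => f0 (g1 (g0 t))) x) = x).
  { intros x Hx; simpl; split.
    - rewrite (proj1 (I0 _ (R1 _ (R0' _ Hx)))). rewrite (proj1 (I1 _ (R0' _ Hx))). apply I0; auto.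
    - rewrite (proj1 (I0 _ (R1' _ (R0' _ Hx)))). rewrite (proj2 (I1 _ (R0' _ Hx))). apply I0; auto. }
  assert (IK2 : forall x, 0 <= x <= 1 ->
     (fun t => f0 (f0 (g1 (g0 (g0 t))))) ((fun t => f0 (f0 (f1 (g0 (g0 t))))) x) = x /\
     (fun t => f0 (f0 (f1 (g0 (g0 t))))) ((fun t => f0 (f0 (g1 (g0 (g0 t))))) x) = x).
  { intros x Hx; simpl.
    pose proof (R0' _ Hx). pose proof (R0' _ H).
    split.
    - rewrite (proj1 (I0 _ (Good_range f0 _ G0 (R1 _ H0)))).
      rewrite (proj1 (I0 _ (R1 _ H0))). rewrite (proj1 (I1 _ H0)).
      rewrite (proj2 (I0 _ H)). apply I0; auto.
    - rewrite (proj1 (I0 _ (Good_range f0 _ G0 (R1' _ H0)))).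
      rewrite (proj1 (I0 _ (R1' _ H0))). rewrite (proj2 (I1 _ H0)).
      rewrite (proj2 (I0 _ H)). apply I0; auto. }
  assert (HK : forall t, 0<=t<=1 -> g1 (f0 (f0 (f1 (g0 t)))) = f0 (f1 (g0 (g1 (f0 t))))).
  { apply (comm_from (fun t => g1 (f0 t)) (fun t => g0 (f1 t)) (fun t => f0 (f1 (g0 t)))
            (fun t => f0 (g1 (g0 t)))); auto; repeat (apply Gc; auto). }
  assert (HK2 : forall t, 0<=t<=1 -> g1 (f0 (f0 (f0 (f1 (g0 (g0 t)))))) = f0 (f0 (f1 (g0 (g0 (g1 (f0 t))))))).
  { apply (comm_from (fun t => g1 (f0 t)) (fun t => g0 (f1 t)) (fun t => f0 (f0 (f1 (g0 (g0 t)))))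
            (fun t => f0 (f0 (g1 (g0 (g0 t)))))); auto; repeat (apply Gc; auto). }
  split.
  - intros a c bn p q [[Hac [Hc1 [Hna [Hnc Hsup]]]] Hup] [Hb [Hbc1 [Hnb [Hnc' Hsb]]]]
      Hp Hagree Hmin Hq Heq.
    split; [|lra].
    assert (Hfb : f1 bn = bn).
    { destruct (Req_dec (f1 bn) bn); auto. exfalso. apply Hnb. split; auto; lra. }
    destruct (Rlt_or_le bn q); auto. exfalso.
    destruct (Req_dec q bn) as [->|Hne].
    + assert (f0 bn > bn) by (apply Hup; lra). lra.
    + apply (core f0 f1 g0 g1 a bn c q); auto; try lra.
  - intros a c d1 rho q [[Hac [Hc1 _]] Hdn] [Had [Hd1 [_ [Hnd _]]]] Hrho Hagr Hmax Hq Heq.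
    split; [lra|].
    assert (Hfd : f1 d1 = d1).
    { destruct (Req_dec (f1 d1) d1); auto. exfalso. apply Hnd. split; auto; lra. }
    destruct (Rlt_or_le q d1); auto. exfalso.
    destruct (Req_dec q d1) as [->|Hne].
    + assert (f0 d1 < d1) by (apply Hdn; lra). lra.
    + assert (Iflip : forall f g, (forall t, 0 <= t <= 1 -> g (f t) = t /\ f (g t) = t) ->
                 forall t, 0 <= t <= 1 -> flip g (flip f t) = t /\ flip f (flip g t) = t).
      { intros f g Hfg t Ht. unfold flip. rewrite !r11.
        rewrite (proj1 (Hfg (1 - t) ltac:(lra))). rewrite (proj2 (Hfg (1 - t) ltac:(lra))).
        split; ring. }
      apply (core (flip f0) (flip f1) (flip g0) (flip g1) (1 - c) (1 - d1) (1 - a) (1 - q));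
        try apply Good_flip; auto; try lra.
      * intros t Ht. unfold flip. rewrite !r11. rewrite HK by lra. auto.
      * intros t Ht. unfold flip. rewrite !r11. rewrite HK2 by lra. auto.
      * intros x Hx. unfold flip. assert (f0 (1 - x) < 1 - x) by (apply Hdn; lra). lra.
      * unfold flip. rewrite r11, Hfd. auto.
      * unfold flip. rewrite r11, Heq. auto.
Qed.
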